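(* Let $p$ be a prime, $n \in \mathbb{N}$, and let $\Gamma = \bigoplus_{i \in I} \mathcal{C}(p^\infty)$ be a direct sum of copies of $\mathcal{C}(p^\infty)$ (over some index set $I$), regarded as a discrete abelian group. For $E \subset \Gamma$ let $E_{p^n} := \{\gamma^{p^{n-1}} : \gamma \in E\}$, and let $E_{1/p^n} := \{\xi_\gamma : \gamma \in E\}$ where, for each $\gamma \in E$, $\xi_\gamma \in \Gamma$ is an element with $\xi_\gamma^{p^{n-1}} = \gamma$. If $E$ is $p^n$-PR, then $E_{p^n}$ is $p$-PR and $|E_{p^n}| = |E|$. If $E$ is $p$-PR, then $E_{1/p^n}$ is $p^n$-PR and $|E_{1/p^n}| = |E|$.
   Context: $\mathcal{C}(p^\infty)$ denotes the group of all $p^m$-th roots of unity, $m \ge 1$. Group operation written multiplicatively. For a discrete abelian group $\Delta$ with compact dual $\widehat{\Delta}$ and $N \in \mathbb{N}$, a subset $E \subset \Delta$ is $N$-PR if for every function $\varphi: E \to \mathbb{Z}_N$ (the $N$-th roots of unity in the unit circle) there exists $x \in \widehat{\Delta}$ with $\varphi(\gamma) = \gamma(x)$ for all $\gamma \in E$. *)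

(* Defs.v *)
From HB Require Import structures.
From mathcomp Require Import all_boot all_order all_algebra.
From mathcomp Require Export boolp classical_sets cardinality.

Import GRing.Theory Num.Theory.
Local Open Scope ring_scope.
Local Open Scope classical_set_scope.

(* Ambient complex field: any numeric algebraically closed field C
   (e.g. the complex numbers); the unit circle is [set z | `|z| = 1]. *)
Section Defs.
Variables (C : numClosedFieldType) (I : Type) (p : nat).

Definition prufer (z : C) : Prop := exists m : nat, (0 < m)%N /\ z ^+ (p ^ m) = 1.

(* Gamma = direct sum over I of copies of C(p^oo), as finitely supported
   families (value 1 off a finite set), with pointwise multiplication. *)
Definition Gamma : set (I -> C) :=
  [set f | (forall i, prufer (f i)) /\
           finite_set [set i | f i != 1]].

Definition gmul (f g : I -> C) : I -> C := fun i => f i * g i.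
Definition gpow (f : I -> C) (k : nat) : I -> C := fun i => f i ^+ k.

(* elements of the dual group: homomorphisms Gamma -> unit circle
   (Gamma is discrete, so all homomorphisms are continuous). *)
Definition character (chi : (I -> C) -> C) : Prop :=
  (forall f, Gamma f -> `|chi f| = 1) /\
  (forall f g, Gamma f -> Gamma g -> chi (gmul f g) = chi f * chi g).

Definition PR (N : nat) (E : set (I -> C)) : Prop :=
  forall phi : (I -> C) -> C, (forall g, E g -> phi g ^+ N = 1) ->
    exists chi, character chi /\ (forall g, E g -> phi g = chi g).

Definition E_pow (n : nat) (E : set (I -> C)) : set (I -> C) :=
  [set gpow g (p ^ (n.-1)) | g in E].
End Defs.

(* Main.v *)
Require Import Defs.
From HB Require Import structures.
From mathcomp Require Import all_boot all_order all_algebra.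
From mathcomp Require Import boolp classical_sets cardinality.
From mathcomp Require Import zify.
Import Order.TTheory GRing.Theory Num.Theory.
Local Open Scope ring_scope.
Local Open Scope classical_set_scope.
Local Open Scope card_scope.

Section Aux.
Variables (C : numClosedFieldType) (I : Type) (p : nat).
Local Notation G := (Gamma C I p).
Local Notation chr := (character C I p).
Local Notation gpow := (gpow C I).
Local Notation gmul := (gmul C I).

Lemma Gamma1 : G (fun _ => 1).
Proof.
split; first by move=> i; exists 1%N; rewrite expr1n.
by apply: (sub_finite_set _ (finite_set0 I)) => i /=; rewrite eqxx.
Qed.

Lemma Gamma_pow f k : G f -> G (gpow f k).
Proof.
case=> Hp Hf; split.
  move=> i; have [m [m0 e]] := Hp i; exists m; split => //.
  by rewrite /Defs.gpow -exprM mulnC exprM e expr1n.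
apply: (sub_finite_set _ Hf) => i /=; apply: contraNN; rewrite /Defs.gpow => /eqP ->.
by rewrite expr1n.
Qed.

Lemma char_neq0 chi f : chr chi -> G f -> chi f != 0.
Proof.
case=> n _ Gf; apply/eqP => e; have := n f Gf; rewrite e normr0 => /eqP.
by rewrite eq_sym oner_eq0.
Qed.

Lemma char_1 chi : chr chi -> chi (fun _ => 1) = 1.
Proof.
move=> c; have := c.2 _ _ Gamma1 Gamma1.
have -> : gmul (fun _ : I => 1 : C) (fun _ => 1) = fun _ => 1.
  by apply: funext => i; rewrite /Defs.gmul mulr1.
move=> e; have nz : chi (fun _ => 1) != 0 by apply: char_neq0 c Gamma1.
by apply: (mulfI nz); rewrite mulr1 -e.
Qed.

Lemma char_pow chi f k : chr chi -> G f -> chi (gpow f k) = chi f ^+ k.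
Proof.
move=> c Gf; elim: k => [|k IH].
  have -> : gpow f 0 = fun _ => 1 by apply: funext => i; rewrite /Defs.gpow expr0.
  by rewrite char_1 // expr0.
have -> : gpow f k.+1 = gmul f (gpow f k).
  by apply: funext => i; rewrite /Defs.gpow /Defs.gmul exprS.
by rewrite c.2 // ?IH ?exprS //; apply: Gamma_pow.
Qed.

Lemma char_mul c1 c2 : chr c1 -> chr c2 -> chr (fun f => c1 f * c2 f).
Proof.
move=> [n1 m1] [n2 m2]; split=> [f Gf|f g Gf Gg].
  by rewrite normrM n1 // n2 // mulr1.
by rewrite m1 // m2 // mulrACA.
Qed.

Lemma char_powc c k : chr c -> chr (fun f => c f ^+ k).
Proof.
move=> [n1 m1]; split=> [f Gf|f g Gf Gg].
  by rewrite normrX n1 // expr1n.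
by rewrite m1 // exprMn.
Qed.

Lemma gpowM f a b : gpow (gpow f a) b = gpow f (a * b).
Proof. by apply: funext => i; rewrite /Defs.gpow exprM. Qed.

Definition PRfam N (T : Type) (F : set T) (e : T -> I -> C) :=
  forall t : T -> C, (forall x, F x -> t x ^+ N = 1) ->
  exists chi, chr chi /\ forall x, F x -> chi (e x) = t x.

Lemma step k T (F : set T) (y : T -> I -> C) : (0 < p)%N -> (0 < k)%N ->
  (forall x, F x -> G (y x)) ->
  @PRfam (p ^ k) T F (fun x : T => gpow (y x) p) -> @PRfam (p ^ k.+1) T F y.
Proof.
move=> p0 k0 Gy H t Ht.
have tp : forall x, F x -> (t x ^+ p) ^+ (p ^ k) = 1.
  by move=> x Fx; rewrite -exprM -expnS; exact: Ht.
have [chi1 [c1 e1]] := H (fun x => t x ^+ p) tp.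
pose r x := t x / chi1 (y x).
have [chi0 [c0 e0]] : exists chi, chr chi /\ forall x, F x -> chi (gpow (y x) p) = r x.
  apply: H => x Fx.
  have Hrp : r x ^+ p = 1.
    rewrite /r expr_div_n -(char_pow _ _ _ c1 (Gy x Fx)).
    rewrite (e1 x Fx) divff //.
    apply/negP => /eqP t0; have := tp x Fx; rewrite t0 expr0n /=.
    have : (p ^ k != 0)%N by rewrite -lt0n expn_gt0 p0.
    by move/negbTE => ->; move/eqP; rewrite eq_sym oner_eq0.
  have [k' ek] : exists k', k = k'.+1 by case: (k) k0 => // k' _; exists k'.
  by rewrite ek expnS exprM Hrp expr1n.
exists (fun f => chi1 f * chi0 f ^+ p); split.
  by apply: char_mul => //; apply: char_powc.
move=> x Fx /=; rewrite -(char_pow _ _ _ c0 (Gy x Fx)).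
rewrite e0 // /r mulrC divfK //.
exact: char_neq0 c1 (Gy x Fx).
Qed.

Lemma exists_omega : prime p -> exists w : C, w ^+ p = 1 /\ w != 1.
Proof.
move=> pp; case: (even_prime pp) => [->|op].
  exists (-1); split; first by rewrite sqrrN expr1n.
  by rewrite lt_eqF // (lt_trans (ltrN10 _) ltr01).
exists (- (p.-root (-1))); split.
  rewrite exprNn -signr_odd op expr1 rootCK ?prime_gt0 //.
  by rewrite mulN1r opprK.
apply/negP => /eqP e.
have : p.-root (-1 : C) = -1 by rewrite -[LHS]opprK e.
move=> e2; have := rootC_lt0 (-1 : C) (prime_gt1 pp); rewrite e2 ltrN10.
by [].
Qed.

Lemma exists_zeta n : prime p -> (1 <= n)%N ->
  exists z : C, z ^+ (p ^ n) = 1 /\ z ^+ (p ^ n.-1) != 1.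
Proof.
move=> pp n1; have [w [wp w1]] := exists_omega pp.
have m0 : (0 < p ^ n.-1)%N by rewrite expn_gt0 prime_gt0.
exists ((p ^ n.-1).-root w); rewrite rootCK //; split => //.
by rewrite -(prednK n1) expnSr exprM rootCK.
Qed.

Lemma part2 n (E : set (I -> C)) (xi : (I -> C) -> (I -> C)) :
  prime p -> (1 <= n)%N ->
  (forall g, E g -> G (xi g) /\ gpow (xi g) (p ^ n.-1) = g) ->
  PR C I p p E -> PR C I p (p ^ n) (xi @` E) /\ (xi @` E #= E).
Proof.
move=> pp n1 hxi HPR.
have fam : forall j, (0 < j)%N -> (j <= n)%N ->
    @PRfam (p ^ j) _ E (fun x => gpow (xi x) (p ^ (n - j))).
  elim=> // j IH _ jn; case: (posnP j) => [j0|j0].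
    subst j; move=> t Ht.
    have [chi [c e]] := HPR t (fun g Eg => etrans (congr1 _ (esym (expn1 p))) (Ht g Eg)).
    exists chi; split => // x Ex; rewrite subn1 (hxi x Ex).2; by rewrite e.
  apply: step => //; first exact: prime_gt0.
    by move=> x Ex; apply: Gamma_pow; exact: (hxi x Ex).1.
  have -> : (fun x => gpow (gpow (xi x) (p ^ (n - j.+1))) p) =
            (fun x => gpow (xi x) (p ^ (n - j))).
    apply: funext => x; rewrite gpowM -expnSr; congr (gpow _ (p ^ _)); lia.
  exact: IH j0 (ltnW jn).
have := fam n n1 (leqnn n); rewrite subnn expn0.
have -> : (fun x => gpow (xi x) 1) = xi.
  by apply: funext => x; apply: funext => i; rewrite /Defs.gpow expr1.
move=> F; split.
  move=> phi Hphi.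
  have [chi [c e]] := F (fun x => phi (xi x)) (fun x Ex => Hphi _ (ex_intro2 _ _ x Ex erefl)).
  by exists chi; split => // _ [x Ex <-]; rewrite e.
apply: inj_card_eq => x y; rewrite !inE => Ex Ey e.
by rewrite -(hxi x Ex).2 -(hxi y Ey).2 e.
Qed.

Lemma part1 n (E : set (I -> C)) :
  prime p -> (1 <= n)%N -> E `<=` G ->
  PR C I p (p ^ n) E -> PR C I p p (E_pow C I p n E) /\ (E_pow C I p n E #= E).
Proof.
move=> pp n1 EG HPR.
have m0 : (0 < p ^ n.-1)%N by rewrite expn_gt0 prime_gt0.
have pn : (p ^ n = p ^ n.-1 * p)%N by rewrite -expnSr prednK.
split.
  move=> phi Hphi.
  pose t x := (p ^ n.-1).-root (phi (gpow x (p ^ n.-1))).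
  have [chi [c e]] : exists chi, chr chi /\ forall x, E x -> t x = chi x.
    apply: HPR => x Ex; rewrite pn exprM /t rootCK //.
    by apply: Hphi; exists x.
  exists chi; split => // _ [x Ex <-].
  by rewrite (char_pow _ _ _ c (EG x Ex)) -e // /t rootCK.
apply: inj_card_eq => x y; rewrite !inE => Ex Ey exy.
case: (pselect (x = y)) => // nxy; exfalso.
have [z [z1 z2]] := exists_zeta n pp n1.
pose phi f := if pselect (f = y) then z else 1.
have hphi : forall g, E g -> phi g ^+ (p ^ n) = 1.
  by move=> g _; rewrite /phi; case: pselect => _ //=; rewrite expr1n.
have [chi [c e]] := HPR phi hphi.
have ey : phi y = z by rewrite /phi; case: pselect.
have ex : phi x = 1 by rewrite /phi; case: pselect.
have := char_pow _ _ (p ^ n.-1) c (EG x Ex); rewrite exy.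
rewrite (char_pow _ _ _ c (EG y Ey)) -(e x Ex) -(e y Ey) ey ex expr1n.
by move/eqP; rewrite (negbTE z2).
Qed.
End Aux.

Theorem corollary3p3 (C : numClosedFieldType) (I : Type) (p n : nat)
  (E : set (I -> C)) :
  prime p -> (1 <= n)%N -> E `<=` Gamma C I p ->
  (PR C I p (p ^ n) E ->
     PR C I p p (E_pow C I p n E) /\ (E_pow C I p n E #= E)) /\
  (forall xi : (I -> C) -> (I -> C),
     (forall g, E g -> Gamma C I p (xi g) /\ gpow C I (xi g) (p ^ n.-1) = g) ->
     PR C I p p E ->
     PR C I p (p ^ n) (xi @` E) /\ (xi @` E #= E)).
Proof.
move=> pp n1 EG; split; first exact: part1.
by move=> xi hxi; apply: part2.
Qed.
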